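(* Let $X$ be a shift space and $N\ge0$. The following are equivalent: (1) the extension graph $\mathcal{E}_X(v)$ is acyclic for every $v\in\mathcal{L}(X)$ with $|v|<N$; (2) the graph $G^L_n(X)$ is acyclic for the labeling for every $n\le N$; (3) the graph $G^R_n(X)$ is acyclic for the labeling for every $n\le N$.
   Context: $X\subseteq\mathcal{A}^{\mathbb{Z}}$ is a shift space over a finite alphabet $\mathcal{A}$ with language $\mathcal{L}(X)$, $\mathcal{L}_n(X)$ its words of length $n$. For $v\in\mathcal{L}(X)$, $E^L_X(v)=\{a:av\in\mathcal{L}(X)\}$, $E^R_X(v)=\{b:vb\in\mathcal{L}(X)\}$, and $\mathcal{E}_X(v)$ is the bipartite graph whose vertices are the disjoint union of $\{a^L:a\in E^L_X(v)\}$ and $\{b^R:b\in E^R_X(v)\}$, with an edge $\{a^L,b^R\}$ whenever $avb\in\mathcal{L}(X)$. $G^L_n(X)$ (resp. $G^R_n(X)$) is the multigraph with labeled edges whose vertex set is $\mathcal{A}$ and which has, for each $v\in\mathcal{L}_n(X)$ and each pair of distinct $a,b\in E^L_X(v)$ (resp. $a,b\in E^R_X(v)$), an undirected edge labeled $v$ between $a$ and $b$. A multigraph with labeled edges is acyclic for the labeling if every simple cycle in it uses only edges with the same label. *)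

(* Defs.v *)
From mathcomp Require Import all_boot all_order all_algebra.
Set Implicit Arguments. Unset Strict Implicit. Unset Printing Implicit Defensive.
Import GRing.Theory Num.Theory.
Local Open Scope ring_scope.

Definition config (A : finType) := int -> A.

Definition shift_map (A : finType) (x : config A) : config A := fun i => x (i + 1).

(* A shift space: a subset of A^Z that is shift-invariant (sigma(X) = X)
   and closed in the product topology (A discrete). *)
Definition shift_space (A : finType) (X : config A -> Prop) : Prop :=
  (forall x, X x -> X (shift_map x)) /\
  (forall x, X x -> exists y, X y /\ shift_map y = x) /\
  (forall x : config A,
     (forall n : nat, exists y, X y /\ forall i : int, `|i| <= n%:R -> y i = x i) ->
     X x).

Definition in_lang (A : finType) (X : config A -> Prop) (w : seq A) : Prop :=
  exists x, X x /\ exists i : int, w = mkseq (fun k => x (i + k%:Z)) (size w).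

Definition extL (A : finType) (X : config A -> Prop) (v : seq A) (a : A) : Prop :=
  in_lang X (a :: v).
Definition extR (A : finType) (X : config A -> Prop) (v : seq A) (b : A) : Prop :=
  in_lang X (rcons v b).

(* Extension graph E_X(v): bipartite graph on (left copies) + (right copies);
   inl a stands for a^L, inr b for b^R. *)
Definition ext_graph_adj (A : finType) (X : config A -> Prop) (v : seq A)
  (p q : A + A) : Prop :=
  match p, q with
  | inl a, inr b => extL X v a /\ extR X v b /\ in_lang X (a :: rcons v b)
  | inr b, inl a => extL X v a /\ extR X v b /\ in_lang X (a :: rcons v b)
  | _, _ => False
  end.

Definition graph_acyclic (V : eqType) (adj : V -> V -> Prop) : Prop :=
  ~ exists (vs : seq V) (x0 : V),
      [/\ 3 <= size vs, uniq vs &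
          forall i, i < size vs ->
            adj (nth x0 vs i) (nth x0 vs ((i.+1) %% size vs))]%N.

(* A multigraph with labeled edges on vertex set V, labels in L, given by
   edge l a b : "there is an (undirected) edge labeled l between a and b"
   (at most one edge with given label and endpoints). *)
Definition simple_cycle (V L : eqType) (edge : L -> V -> V -> Prop)
  (vs : seq V) (ls : seq L) (x0 : V) (l0 : L) : Prop :=
  let k := size vs in
  let a i := nth x0 vs i in
  let b i := nth x0 vs ((i.+1) %% k) in
  let l i := nth l0 ls i in
  [/\ (2 <= k)%N, size ls = k, uniq vs,
      (forall i, (i < k)%N -> edge (l i) (a i) (b i)) &
      (forall i j, (i < j)%N -> (j < k)%N ->
         ~ (l i = l j /\ ((a i = a j /\ b i = b j) \/ (a i = b j /\ b i = a j))))].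

Definition acyclic_for_labeling (V L : eqType) (edge : L -> V -> V -> Prop) : Prop :=
  forall vs ls x0 l0, simple_cycle edge vs ls x0 l0 ->
    forall i j, (i < size ls)%N -> (j < size ls)%N -> nth l0 ls i = nth l0 ls j.

Definition GL_edge (A : finType) (X : config A -> Prop) (n : nat)
  (v : seq A) (a b : A) : Prop :=
  [/\ in_lang X v, size v = n, a <> b, extL X v a & extL X v b].
Definition GR_edge (A : finType) (X : config A -> Prop) (n : nat)
  (v : seq A) (a b : A) : Prop :=
  [/\ in_lang X v, size v = n, a <> b, extR X v a & extR X v b].

(* Main.v *)
Require Import Defs.
From mathcomp Require Import all_boot all_order all_algebra.
From mathcomp Require Import zify.
From Stdlib Require Import Classical.
Set Implicit Arguments. Unset Strict Implicit. Unset Printing Implicit Defensive.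

Lemma modS_cases i k : i < k -> i.+1 %% k = if i.+1 < k then i.+1 else 0.
Proof.
move=> ik; case: ifP => h; first by rewrite modn_small.
have -> : i.+1 = k by lia.
by rewrite modnn.
Qed.

Section Gen.
Variables (V Q : eqType) (R : V -> Q -> Prop).

Definition cyc k (f : nat -> V) (g : nat -> Q) :=
  [/\ 2 <= k, (forall i j, i < k -> j < k -> f i = f j -> i = j) &
      forall i, i < k -> R (f i) (g i) /\ R (f (i.+1 %% k)) (g i)].

Definition injk k (g : nat -> Q) := forall i j, i < k -> j < k -> g i = g j -> i = j.

Lemma extract k : forall f g, cyc k f g -> (exists p, p < k /\ g p <> g 0) ->
  exists k' f' g', cyc k' f' g' /\ injk k' g'.
Proof.
elim: k {-2}k (leqnn k) => [|K IH] k kK f g [k2 finj fe] [p [pk gp]].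
  lia.
case: (classic (exists i j, [/\ i < j, j < k & g i = g j])); last first.
  move=> nex; exists k, f, g; split => //.
  move=> i j ik jk gij; case: (ltngtP i j) => // hij; case: nex.
    by exists i, j.
  by exists j, i.
move=> [i0 [j0 [ij0 jk0 gij0]]].
pose P d := [exists i : 'I_k, [&& 0 < d, i + d < k & g i == g (i + d)]].
have hP : exists d, P d.
  exists (j0 - i0); apply/existsP; exists (Ordinal (ltn_trans ij0 jk0)) => /=.
  have -> : i0 + (j0 - i0) = j0 by lia.
  by rewrite gij0 eqxx jk0 andbT; lia.
case: (ex_minnP hP) => d /existsP [[i ik] /= /and3P [d0 idk /eqP gid]] dmin.
have dmin' : forall i' j', i' < j' -> j' < k -> g i' = g j' -> d <= j' - i'.
  move=> i' j' h1 h2 h3; apply: dmin; apply/existsP.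
  exists (Ordinal (ltn_trans h1 h2)) => /=.
  have -> : i' + (j' - i') = j' by lia.
  by rewrite h3 eqxx h2 andbT; lia.
have [d1|d2] := eqVneq d 1.
  subst d; rewrite addn1 in idk gid.
  have k3 : 2 < k.
    case: (ltngtP 2 k) => //; first lia.
    move=> k2'; subst k.
    have i0' : i = 0 by lia. subst i.
    case: p pk gp => [|[|//]] _ //=; by rewrite gid.
  pose f' t := if t <= i then f t else f t.+1.
  pose g' t := if t <= i then g t else g t.+1.
  have := IH k.-1 _ f' g'; case.
  - lia.
  - split; first lia.
    + move=> a b ak bk; rewrite /f'.
      case: ifP => ha; case: ifP => hb => h.
      * by apply: finj => //; lia.
      * have := finj _ _ _ _ h; lia.
      * have := finj _ _ _ _ h; lia.
      * have := finj _ _ _ _ h; lia.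
    + move=> t tk; rewrite /f' /g' (modS_cases tk).
      case: (ltngtP t i) => hti.
      * have := fe t (ltn_trans hti ik); rewrite (modS_cases (ltn_trans hti ik)).
        have -> : t.+1 < k.-1 by lia. have -> : t.+1 <= i by lia.
        by have -> : t.+1 < k by lia.
      * have h1 : t.+1 < k by lia.
        have := fe t.+1 h1; rewrite (modS_cases h1).
        have -> : (t.+2 < k) = (t.+1 < k.-1) by lia.
        case: ifP => h2 //.
        by have -> : t.+1 <= i = false by lia.
      * subst t.
        have := fe i ik; rewrite (modS_cases ik) idk => -[r1 _].
        split => //.
        have := fe i.+1 idk; rewrite (modS_cases idk) -gid => -[_ r2].
        move: r2; have -> : (i.+2 < k) = (i.+1 < k.-1) by lia.
        case: ifP => h2 //.
        by have -> : i.+1 <= i = false by lia.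
  - exists (if p <= i then p else p.-1); split; first by case: ifP; lia.
    rewrite /g' /=.
    case: (leqP p i) => hp.
      by rewrite hp.
    have [pe|hpi] := eqVneq p i.+1.
      rewrite pe /= leqnn gid; by move: gp; rewrite pe.
    have -> : p.-1 <= i = false by lia.
    by have -> : p.-1.+1 = p by lia.
  - by move=> k' [f2 [g2 H]]; exists k', f2, g2.
exists d, (fun t => f (i.+1 + t)), (fun t => g (i.+1 + t)); split.
  split; first lia.
  - move=> a b ad bd h; have := finj _ _ _ _ h; lia.
  - move=> t td; have h1 : i.+1 + t < k by lia.
    have [r1 r2] := fe _ h1; split => //.
    rewrite (modS_cases td); case: ifP => h2.
      move: r2; rewrite (modS_cases h1).
      have -> : (i.+1 + t).+1 < k by lia.
      by rewrite addnS.
    have -> : i.+1 + t = i + d by lia.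
    rewrite -gid addn0.
    have idk1 : i.+1 < k by lia. by have := fe i ik; rewrite (modS_cases ik) idk1 => -[].
move=> a b ad bd h; case: (ltngtP a b) => // hab.
  have := dmin' _ _ _ _ h; lia.
have := dmin' _ _ _ _ (esym h); lia.
Qed.

Definition adjR (p q : (V + Q)%type) : Prop :=
  match p, q with
  | inl a, inr c => R a c
  | inr c, inl a => R a c
  | _, _ => False
  end.

Lemma cyc_to_list k f g : cyc k f g -> injk k g ->
  exists (vs : seq (V + Q)%type) x0,
   [/\ 3 <= size vs, uniq vs &
     forall i, i < size vs -> adjR (nth x0 vs i) (nth x0 vs (i.+1 %% size vs))].
Proof.
move=> [k2 finj fe] ginj.
pose h t : (V + Q)%type := if odd t then inr (g t./2) else inl (f t./2).
exists (mkseq h k.*2), (h 0); rewrite size_mkseq; split.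
- lia.
- rewrite /mkseq map_inj_in_uniq ?iota_uniq // => a b.
  rewrite !mem_iota /= !add0n => ak bk; rewrite /h.
  case: ifP => oa; case: ifP => ob // [] e.
  + have := ginj _ _ _ _ e; lia.
  + have := finj _ _ _ _ e; lia.
- move=> i ik.
  have ik' : i.+1 %% k.*2 < k.*2 by rewrite ltn_pmod //; lia.
  rewrite !nth_mkseq // (modS_cases ik) /h.
  case: (ltnP i.+1 k.*2) => h1; case: ifP => oi.
  + rewrite /= oi /=.
    have -> : uphalf i = (i./2).+1 %% k by rewrite -[uphalf i]/(i.+1./2) modn_small; lia.
    have [] := fe i./2 _ => //; lia.
  + rewrite /= oi /=.
    have -> : uphalf i = i./2 by rewrite -[uphalf i]/(i.+1./2); lia.
    have [] := fe i./2 _ => //; lia.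
  + have e : i./2 = k.-1 by lia.
    rewrite e /=.
    have := fe k.-1 _; have -> : k.-1.+1 = k by lia.
    rewrite modnn => -[] //; lia.
  + lia.
Qed.

Definition side (p : (V + Q)%type) := if p is inr _ then true else false.

Lemma adjR_side p q : adjR p q -> side q = ~~ side p.
Proof. by case: p => [a|c]; case: q. Qed.

Lemma list_to_cyc (vs : seq (V + Q)%type) x0 :
  3 <= size vs -> uniq vs ->
  (forall i, i < size vs -> adjR (nth x0 vs i) (nth x0 vs (i.+1 %% size vs))) ->
  exists k f g, cyc k f g /\ injk k g.
Proof.
set m := size vs => m3 vsu adj.
set s0 := side (nth x0 vs 0).
have sideP : forall i, i < m -> side (nth x0 vs i) = s0 (+) odd i.
  elim=> [|i IHi] im; first by rewrite addbF.
  have := adjR_side (adj i (ltnW im)); rewrite modn_small // => ->.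
  by rewrite IHi ?(ltnW im) //= addbN.
have meven : ~~ odd m.
  have hm1 : m.-1 < m by lia.
  have := adjR_side (adj m.-1 hm1); have -> : m.-1.+1 = m by lia.
  rewrite modnn -/s0 sideP //.
  case om: (odd m) => //.
  have -> : odd m.-1 = false by lia.
  by case: (s0).
set k := m./2.
have mk : m = k.*2 by lia.
have [dv dq] : (V * Q)%type.
  have h01 : 0 < m by lia.
  have := adj 0 h01; rewrite modn_small; last lia.
  case: (nth x0 vs 0) => [a|c]; case: (nth x0 vs 1) => [a'|c'] //= _.
pose getV (p : (V + Q)%type) := if p is inl a then a else dv.
pose getQ (p : (V + Q)%type) := if p is inr c then c else dq.
have getVP p : side p = false -> p = inl (getV p) by case: p.
have getQP p : side p = true -> p = inr (getQ p) by case: p.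
set s : nat := s0.
have hs : s <= 1 by rewrite /s; case: (s0).
have s0E : s0 = (s == 1) by rewrite /s; case: (s0).
pose A t := t.*2 + s.
pose B t := (A t).+1 %% m.
have Am t : t < k -> A t < m by rewrite /A; lia.
have BE t : t < k -> B t = if (A t).+1 < m then (A t).+1 else 0.
  by move=> tk; rewrite /B (modS_cases (Am t tk)).
have Bm t : t < k -> B t < m by move=> tk; rewrite BE //; case: ifP => //; lia.
have sideA t : t < k -> side (nth x0 vs (A t)) = false.
  move=> tk; rewrite sideP ?Am // /A oddD odd_double /s.
  by case: (s0).
have sideB t : t < k -> side (nth x0 vs (B t)) = true.
  move=> tk; rewrite BE //; case: ifP => h.
    rewrite sideP // /= /A oddD odd_double /s.
    by case: (s0).
  rewrite -/s0 s0E; apply/eqP; move: h; rewrite /A; lia.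
pose f t := getV (nth x0 vs (A t)).
pose g t := getQ (nth x0 vs (B t)).
have fE t : t < k -> nth x0 vs (A t) = inl (f t) by move=> tk; apply: getVP; apply: sideA.
have gE t : t < k -> nth x0 vs (B t) = inr (g t) by move=> tk; apply: getQP; apply: sideB.
exists k, f, g; split; first split.
- lia.
- move=> a b ak bk e.
  have : nth x0 vs (A a) = nth x0 vs (A b) by rewrite fE // fE // e.
  move/eqP; rewrite nth_uniq ?Am //; move/eqP; rewrite /A; lia.
- move=> t tk; split.
    have := adj (A t) (Am t tk); rewrite -/(B t) fE // gE //.
  have := adj (B t) (Bm t tk); rewrite gE //.
  suff -> : (B t).+1 %% m = A (t.+1 %% k) by rewrite fE //; rewrite ltn_pmod //; lia.
  rewrite (modS_cases (Bm t tk)) (modS_cases tk) BE //.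
  case: (ltnP (A t).+1 m) => h1; case: (ltnP t.+1 k) => h2; case: ifP => h3;
    rewrite /A in h1 h3 *; lia.
- move=> a b ak bk e.
  have : nth x0 vs (B a) = nth x0 vs (B b) by rewrite gE // gE // e.
  move/eqP; rewrite nth_uniq ?Bm //; move/eqP; rewrite !BE //.
  case: ifP; case: ifP; rewrite /A; lia.
Qed.

End Gen.

Section Step.
Variables (A : eqType) (E : nat -> seq A -> A -> A -> Prop)
  (mk : seq A -> A -> seq A) (pu : seq A -> seq A) (pc : A -> seq A -> A)
  (R : seq A -> A -> A -> Prop).
Hypothesis mk_inj : forall u c u' c', mk u c = mk u' c' -> u = u' /\ c = c'.
Hypothesis E_size : forall n v a b, E n v a b -> size v = n.
Hypothesis E_dec : forall n v a b d, E n.+1 v a b -> v = mk (pu v) (pc d v).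
Hypothesis E_proj : forall n u c a b, E n.+1 (mk u c) a b -> E n u a b.
Hypothesis E_R : forall n u c a b, E n.+1 (mk u c) a b -> R u a c /\ R u b c.
Hypothesis E_intro : forall n u c a b, size u = n -> a <> b -> R u a c -> R u b c ->
  E n.+1 (mk u c) a b.

Lemma base : acyclic_for_labeling (E 0).
Proof.
move=> vs ls x0 l0; rewrite /simple_cycle /= => -[k2 szl uq edg _] i j il jl.
have h : forall i, i < size ls -> nth l0 ls i = [::].
  move=> t tl; apply/size0nil; apply: (E_size (edg t _)); by rewrite -szl.
by rewrite !h.
Qed.

Lemma step_bwd n u k f g : acyclic_for_labeling (E n.+1) -> size u = n ->
  cyc (R u) k f g -> injk k g -> False.
Proof.
move=> acy su [k2 finj fe] ginj.
have modk i : i < k -> i.+1 %% k < k by move=> _; rewrite ltn_pmod //; lia.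
have sc : simple_cycle (E n.+1) (mkseq f k) (mkseq (fun i => mk u (g i)) k) (f 0) (mk u (g 0)).
  rewrite /simple_cycle /= !size_mkseq; split => //.
  + rewrite /mkseq map_inj_in_uniq ?iota_uniq // => a b.
    rewrite !mem_iota /= !add0n; exact: finj.
  + move=> i ik; rewrite !nth_mkseq ?modk //.
    have [r1 r2] := fe i ik; apply: E_intro => // e.
    have := finj _ _ ik (modk _ ik) e; rewrite (modS_cases ik); case: ifP; lia.
  + move=> i j ij jk; have ik : i < k by lia.
    rewrite !nth_mkseq ?modk //.
    move=> [/mk_inj [_ e] _]; have := ginj _ _ _ jk e; lia.
have k0 : 0 < k by lia.
have := acy _ _ _ _ sc 0 1; rewrite !size_mkseq !nth_mkseq //.
move=> /(_ k0 k2) /mk_inj [_ e]; have := ginj 0 1 k0 k2 e; lia.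
Qed.

Lemma step_fwd n : acyclic_for_labeling (E n) ->
  (forall u c a b, E n.+1 (mk u c) a b ->
     forall k f g, cyc (R u) k f g -> injk k g -> False) ->
  acyclic_for_labeling (E n.+1).
Proof.
move=> acn Hc vs ls x0 l0 sc.
move: (sc); rewrite /simple_cycle /= => -[k2 szl uq edg dst] i j il jl.
rewrite szl in il jl.
set k := size vs in k2 szl il jl edg dst.
pose a i := nth x0 vs i.
have modk t : t < k -> t.+1 %% k < k by move=> _; rewrite ltn_pmod //; lia.
pose u i := pu (nth l0 ls i).
pose g i := pc x0 (nth l0 ls i).
have lE : forall i, i < k -> nth l0 ls i = mk (u i) (g i).
  by move=> t tk; apply: (E_dec x0 (edg t tk)).
have Eu : forall i, i < k -> E n (u i) (a i) (a (i.+1 %% k)).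
  move=> t tk; have := edg t tk; rewrite (lE t tk); exact: E_proj.
have ainj : forall i j, i < k -> j < k -> a i = a j -> i = j.
  by move=> p q pk qk /eqP; rewrite /a nth_uniq // => /eqP.
have uall : forall i, i < k -> u i = u 0.
  case: (classic (k = 2 /\ u 0 = u 1)) => [[ke u01]|nh].
    by move=> t; rewrite ke; case: t => [|[|]].
  have sc' : simple_cycle (E n) vs (map pu ls) x0 (pu l0).
    rewrite /simple_cycle /= size_map -/k; split => //.
    + move=> t tk; rewrite (nth_map l0); last by rewrite szl.
      exact: Eu.
    + move=> p q pq qk; rewrite !(nth_map l0) ?szl //; last lia.
      move=> [e [[e1 e2]|[e1 e2]]].
        have := ainj _ _ _ _ e1; lia.
      have pk : p < k by lia.
      have h1 := ainj _ _ pk (modk _ qk) e1.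
      have h2 := ainj _ _ (modk _ pk) qk e2.
      move: h1 h2; rewrite (modS_cases qk) (modS_cases pk).
      case: ifP; case: ifP; try lia.
      move=> h1 h2 h3 h4; apply: nh; split; first lia.
      have p0 : p = 0 by lia. have q1 : q = 1 by lia.
      by move: e; rewrite p0 q1.
  move=> t tk; have k0 : 0 < k by lia.
  have := acn _ _ _ _ sc' t 0; rewrite size_map szl => /(_ tk k0).
  by rewrite !(nth_map l0) ?szl.
have gcyc : cyc (R (u 0)) k a g.
  split => // t tk; have := edg t tk; rewrite (lE t tk) (uall t tk); exact: E_R.
case: (classic (exists p, p < k /\ g p <> g 0)) => [ex|nex].
  have [k' [f' [g' [c' i']]]] := extract gcyc ex.
  have k0 : 0 < k by lia.
  have := edg 0 k0; rewrite (lE 0 k0) => e0.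
  by case: (Hc _ _ _ _ e0 _ _ _ c' i').
have gall : forall p, p < k -> g p = g 0.
  move=> p pk; apply: NNPP => h; apply: nex; by exists p.
by rewrite !lE // (uall i il) (uall j jl) (gall i il) (gall j jl).
Qed.
End Step.

Lemma cycle_map (T U : eqType) (adj1 : T -> T -> Prop) (adj2 : U -> U -> Prop)
  (h : T -> U) (vs : seq T) x0 : injective h ->
  (forall p q, adj1 p q -> adj2 (h p) (h q)) ->
  [/\ 3 <= size vs, uniq vs &
     forall i, i < size vs -> adj1 (nth x0 vs i) (nth x0 vs (i.+1 %% size vs))] ->
  [/\ 3 <= size (map h vs), uniq (map h vs) &
     forall i, i < size (map h vs) ->
       adj2 (nth (h x0) (map h vs) i) (nth (h x0) (map h vs) (i.+1 %% size (map h vs)))].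
Proof.
move=> hinj hadj [s3 u adj]; rewrite size_map map_inj_uniq //; split => // i il.
rewrite !(nth_map x0) //; first by apply: hadj; apply: adj.
by rewrite ltn_pmod //; lia.
Qed.

Section Concrete.
Variables (A : finType) (X : config A -> Prop).

Lemma in_lang_cat s t : in_lang X (s ++ t) -> in_lang X s /\ in_lang X t.
Proof.
move=> [x [Xx [i e]]]; split; exists x; split => //.
- exists i; apply: (@eq_from_nth _ (x 0)); first by rewrite size_mkseq.
  move=> j js; rewrite nth_mkseq //.
  have := nth_cat (x 0) s t j; rewrite js => <-.
  by rewrite e nth_mkseq // size_cat; lia.
- exists (i + (size s)%:Z)%R; apply: (@eq_from_nth _ (x 0)); first by rewrite size_mkseq.
  move=> j js; rewrite nth_mkseq //.
  have := nth_cat (x 0) s t (size s + j); rewrite ltnNge leq_addr /= addKn => <-.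
  rewrite e nth_mkseq; last by rewrite size_cat; lia.
  by rewrite PoszD GRing.addrA.
Qed.

Lemma in_lang_cons a v : in_lang X (a :: v) -> in_lang X v.
Proof. by move=> h; have [] := in_lang_cat (s := [:: a]) h. Qed.

Lemma in_lang_rcons v b : in_lang X (rcons v b) -> in_lang X v.
Proof. by rewrite -cats1 => /in_lang_cat []. Qed.

Lemma in_lang_cons_rcons a v b : in_lang X (a :: rcons v b) ->
  in_lang X (a :: v) /\ in_lang X (rcons v b).
Proof.
move=> h; split; last exact: in_lang_cons h.
by move: h; rewrite -rcons_cons; apply: in_lang_rcons.
Qed.

Definition RL (u : seq A) (a c : A) := in_lang X (a :: rcons u c).
Definition RRt (u : seq A) (a c : A) := in_lang X (c :: rcons u a).
Definition puL (v : seq A) := if v is x :: s then belast x s else [::].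
Definition pcL (d : A) (v : seq A) := last d v.

Definition swap (p : (A + A)%type) : (A + A)%type :=
  match p with inl a => inr a | inr a => inl a end.
Lemma swap_inj : injective swap. Proof. by case=> a; case=> b //= [->]. Qed.

End Concrete.

Section Main.
Variables (A : finType) (X : config A -> Prop).

Lemma mk_injL (u : seq A) c u' c' : rcons u c = rcons u' c' -> u = u' /\ c = c'.
Proof. by move/rcons_inj => [-> ->]. Qed.
Lemma mk_injR (u : seq A) c u' c' : c :: u = c' :: u' -> u = u' /\ c = c'.
Proof. by move=> [-> ->]. Qed.

Lemma GL_size n v a b : GL_edge X n v a b -> size v = n. Proof. by case. Qed.
Lemma GR_size n v a b : GR_edge X n v a b -> size v = n. Proof. by case. Qed.
Lemma GL_dec n v a b d : GL_edge X n.+1 v a b -> v = rcons (puL v) (pcL d v).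
Proof. by case: v => [|x s] [_ sz _ _ _] //=; rewrite /pcL /=; exact: lastI. Qed.
Lemma GR_dec n v a b d : GR_edge X n.+1 v a b -> v = head d v :: behead v.
Proof. by case: v => [|x s] [_ sz _ _ _]. Qed.
Lemma GL_proj n u c a b : GL_edge X n.+1 (rcons u c) a b -> GL_edge X n u a b.
Proof.
case=> l sz ne ea eb; split => //.
- exact: in_lang_rcons l.
- by move: sz; rewrite size_rcons => -[].
- exact: (in_lang_cons_rcons ea).1.
- exact: (in_lang_cons_rcons eb).1.
Qed.
Lemma GR_proj n u c a b : GR_edge X n.+1 (c :: u) a b -> GR_edge X n u a b.
Proof.
case=> l sz ne ea eb; split => //.
- exact: in_lang_cons l.
- by move: sz => /= -[].
- exact: in_lang_cons ea.
- exact: in_lang_cons eb.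
Qed.
Lemma GL_R n u c a b : GL_edge X n.+1 (rcons u c) a b -> RL X u a c /\ RL X u b c.
Proof. by case. Qed.
Lemma GR_R n u c a b : GR_edge X n.+1 (c :: u) a b -> RRt X u a c /\ RRt X u b c.
Proof. by case. Qed.
Lemma GL_intro n u c a b : size u = n -> a <> b -> RL X u a c -> RL X u b c ->
  GL_edge X n.+1 (rcons u c) a b.
Proof.
move=> su ne ha hb; split => //.
- exact: (in_lang_cons_rcons ha).2.
- by rewrite size_rcons su.
Qed.
Lemma GR_intro n u c a b : size u = n -> a <> b -> RRt X u a c -> RRt X u b c ->
  GR_edge X n.+1 (c :: u) a b.
Proof.
move=> su ne ha hb; split => //.
- exact: (in_lang_cons_rcons ha).1.
- by rewrite /= su.
Qed.

Definition P1 N := forall v : seq A, in_lang X v -> (size v < N)%N ->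
          graph_acyclic (ext_graph_adj X v).

Lemma adjL_ext u p q : adjR (RL X u) p q -> ext_graph_adj X u p q.
Proof.
case: p => [a|c]; case: q => [a'|c'] //= h.
- by have [h1 h2] := in_lang_cons_rcons h.
- by have [h1 h2] := in_lang_cons_rcons h.
Qed.
Lemma ext_adjL u p q : ext_graph_adj X u p q -> adjR (RL X u) p q.
Proof. by case: p => [a|c]; case: q => [a'|c'] //= [_ []]. Qed.
Lemma adjR_ext u p q : adjR (RRt X u) p q -> ext_graph_adj X u (swap p) (swap q).
Proof.
case: p => [a|c]; case: q => [a'|c'] //= h.
- by have [h1 h2] := in_lang_cons_rcons h.
- by have [h1 h2] := in_lang_cons_rcons h.
Qed.
Lemma ext_adjR u p q : ext_graph_adj X u p q -> adjR (RRt X u) (swap p) (swap q).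
Proof. by case: p => [a|c]; case: q => [a'|c'] //= [_ []]. Qed.

Lemma L12 N : P1 N <->
  (forall n : nat, (n <= N)%N -> acyclic_for_labeling (GL_edge X n)).
Proof.
split.
- move=> H1; elim=> [|n IH] hn; first by apply: base; exact: GL_size.
  apply: (@step_fwd _ (GL_edge X) (fun u c => rcons u c) (@puL A) (@pcL A) (RL X)).
  + exact: GL_dec.
  + exact: GL_proj.
  + exact: GL_R.
  + exact: IH (ltnW hn).
  + move=> u c a b e k f g cy ij.
    have [vs [x0 [s3 uq adj]]] := cyc_to_list cy ij.
    have [lu su _ _ _] := GL_proj e.
    apply: (H1 u lu); first by rewrite su.
    exists vs, x0; split => // i il; apply: adjL_ext; exact: adj.
- move=> H2 v vl vN [vs [x0 [s3 uq adj]]].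
  have [k [f [g [cy ij]]]] := @list_to_cyc _ _ (RL X v) vs x0 s3 uq
     (fun i il => ext_adjL (adj i il)).
  exact: (@step_bwd _ (GL_edge X) (fun u c => rcons u c) (RL X) (@mk_injL)
     (@GL_intro) (size v) v k f g (H2 _ vN) erefl cy ij).
Qed.

Lemma L13 N : P1 N <->
  (forall n : nat, (n <= N)%N -> acyclic_for_labeling (GR_edge X n)).
Proof.
split.
- move=> H1; elim=> [|n IH] hn; first by apply: base; exact: GR_size.
  apply: (@step_fwd _ (GR_edge X) (fun u c => c :: u) behead (fun d v => head d v) (RRt X)).
  + exact: GR_dec.
  + exact: GR_proj.
  + exact: GR_R.
  + exact: IH (ltnW hn).
  + move=> u c a b e k f g cy ij.
    have [vs [x0 H]] := cyc_to_list cy ij.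
    have [s3 uq adj] := @cycle_map _ _ _ _ (@swap A) vs x0 (@swap_inj A) (@adjR_ext u) H.
    have [lu su _ _ _] := GR_proj e.
    apply: (H1 u lu); first by rewrite su.
    by exists (map (@swap A) vs), (@swap A x0); split.
- move=> H2 v vl vN [vs [x0 H]].
  have [s3 uq adj] := @cycle_map _ _ _ _ (@swap A) vs x0 (@swap_inj A) (@ext_adjR v) H.
  have [k [f [g [cy ij]]]] := @list_to_cyc _ _ (RRt X v) _ _ s3 uq adj.
  exact: (@step_bwd _ (GR_edge X) (fun u c => c :: u) (RRt X) (@mk_injR)
     (@GR_intro) (size v) v k f g (H2 _ vN) erefl cy ij).
Qed.

End Main.

Theorem mainTheorem5 (A : finType) (X : config A -> Prop) (N : nat) :
  shift_space X ->
  [/\ ((forall v : seq A, in_lang X v -> (size v < N)%N ->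
          graph_acyclic (ext_graph_adj X v)) <->
       (forall n : nat, (n <= N)%N -> acyclic_for_labeling (GL_edge X n))),
      ((forall n : nat, (n <= N)%N -> acyclic_for_labeling (GL_edge X n)) <->
       (forall n : nat, (n <= N)%N -> acyclic_for_labeling (GR_edge X n))) &
      ((forall n : nat, (n <= N)%N -> acyclic_for_labeling (GR_edge X n)) <->
       (forall v : seq A, in_lang X v -> (size v < N)%N ->
          graph_acyclic (ext_graph_adj X v)))].
Proof.
move=> _; have h12 := L12 X N; have h13 := L13 X N; rewrite /P1 in h12 h13.
split; tauto.
Qed.
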